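(* In the setting below, the associator obtained by twisting the trivial associator of $H$ by $\mathbb J$, namely $\Phi:=(1\otimes\mathbb J)(\mathrm{id}\otimes\Delta)(\mathbb J)(\Delta\otimes\mathrm{id})(\mathbb J^{-1})(\mathbb J^{-1}\otimes1)$, is given by $$\Phi=\sum_{\beta,\gamma,\delta\in\mathbb{Z}_n^m}\Bigl(\prod_{i,j=1}^m q^{a_{ij}\beta_i((\gamma_j+\delta_j)'-\gamma_j-\delta_j)}\Bigr)\mathbf 1_\beta\otimes\mathbf 1_\gamma\otimes\mathbf 1_\delta,$$ where $\{\mathbf 1_\beta\mid\beta\in\mathbb{Z}_n^m\}$ are the primitive idempotents of the group algebra $\mathbb{C}[g_1^n,\dots,g_m^n]\cong\mathbb{C}[\mathbb{Z}_n^m]$ with $\mathbf 1_\beta g_i^n=q^{n\beta_i}\mathbf 1_\beta$, the components of $\beta,\gamma,\delta$ are regarded as integers in $\{0,\dots,n-1\}$, and $(\gamma_j+\delta_j)'$ is the remainder of $\gamma_j+\delta_j$ modulo $n$. In particular $\Phi\in A\otimes A\otimes A$.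
   Context: Setting: $n\ge2$, $q$ a primitive root of unity of order $n^2$, $m\ge1$; $H$ a finite dimensional Hopf algebra over $\mathbb{C}$ generated by grouplike $g_1,\dots,g_m$ and $e_1,\dots,e_m$ with $g_i^{n^2}=1$, $g_ig_j=g_jg_i$, $g_ie_jg_i^{-1}=q^{\delta_{ij}}e_j$, $\Delta(e_i)=e_i\otimes K_i+1\otimes e_i$, $K_i=\prod_jg_j^{a_{ij}}$, $a_{ij}\in\mathbb{Z}_{n^2}$; $H$ projects onto $\mathbb{C}[(\mathbb{Z}_{n^2})^m]$ via $g_i\mapsto g_i$, $e_i\mapsto0$. $A\subset H$ is the subalgebra generated by the $g_i^n$ and $e_i$. $\{1_\beta\mid\beta\in(\mathbb{Z}_{n^2})^m\}$ are the primitive idempotents of $\mathbb{C}[g_1,\dots,g_m]$ with $1_\beta g_i=q^{\beta_i}1_\beta$. For $z,y\in\mathbb{Z}_{n^2}$ represented in $\{0,\dots,n^2-1\}$, $c(z,y)=q^{-z(y-y')}$ with $y'$ the remainder of $y$ mod $n$, and $\mathbb J=\sum_{\beta,\gamma\in(\mathbb{Z}_{n^2})^m}\prod_{i,j}c(\beta_i,\gamma_j)^{a_{ij}}1_\beta\otimes1_\gamma$. *)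

(* Defs.v *)
From HB Require Import structures.
From mathcomp Require Import all_boot all_order all_algebra all_field.
Set Implicit Arguments. Unset Strict Implicit. Unset Printing Implicit Defensive.
Import GRing.Theory Num.Theory.
Local Open Scope ring_scope.

(* Group algebra C[T] of a finite abelian (additive) group T: an element
   sum_t x(t) t is represented by its coefficient function x. *)
Notation GA T := {ffun T -> algC}.

Definition gscale (T : finType) (c : algC) (x : GA T) : GA T :=
  [ffun t => c * x t].

(* C[T] (x) C[U] = C[T * U] via t (x) u |-> (t,u). *)
Definition tens2 (T U : finType) (x : GA T) (y : GA U) : GA (T * U)%type :=
  [ffun p => x p.1 * y p.2].
Definition tens3 (T U V : finType) (x : GA T) (y : GA U) (z : GA V) :
  GA (T * U * V)%type := [ffun p => x p.1.1 * y p.1.2 * z p.2].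

(* G = (Z_{n^2})^m; the element g : G stands for g_1^{g 1} ... g_m^{g m}. *)
Notation Grp m n := {ffun 'I_m -> 'Z_(n ^ 2)}.

Definition gmul2 (m n : nat) (x y : GA (Grp m n * Grp m n)%type) :
  GA (Grp m n * Grp m n)%type :=
  [ffun t : (Grp m n * Grp m n)%type =>
     \sum_(s : (Grp m n * Grp m n)%type) x s * y (t.1 - s.1, t.2 - s.2)].
Definition gone2 (m n : nat) : GA (Grp m n * Grp m n)%type :=
  [ffun t : (Grp m n * Grp m n)%type => ((t.1 == 0) && (t.2 == 0))%:R].
Definition gmul3 (m n : nat) (x y : GA (Grp m n * Grp m n * Grp m n)%type) :
  GA (Grp m n * Grp m n * Grp m n)%type :=
  [ffun t : (Grp m n * Grp m n * Grp m n)%type =>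
     \sum_(s : (Grp m n * Grp m n * Grp m n)%type)
        x s * y (t.1.1 - s.1.1, t.1.2 - s.1.2, t.2 - s.2)].

(* 1 (x) J, J (x) 1, (id (x) Delta)(J), (Delta (x) id)(J), with Delta g = g (x) g. *)
Definition one_tens (m n : nat) (J : GA (Grp m n * Grp m n)%type) :
  GA (Grp m n * Grp m n * Grp m n)%type :=
  [ffun p : (Grp m n * Grp m n * Grp m n)%type => (p.1.1 == 0)%:R * J (p.1.2, p.2)].
Definition tens_one (m n : nat) (J : GA (Grp m n * Grp m n)%type) :
  GA (Grp m n * Grp m n * Grp m n)%type :=
  [ffun p : (Grp m n * Grp m n * Grp m n)%type => (p.2 == 0)%:R * J (p.1.1, p.1.2)].
Definition id_Delta (m n : nat) (J : GA (Grp m n * Grp m n)%type) :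
  GA (Grp m n * Grp m n * Grp m n)%type :=
  [ffun p : (Grp m n * Grp m n * Grp m n)%type => (p.1.2 == p.2)%:R * J (p.1.1, p.1.2)].
Definition Delta_id (m n : nat) (J : GA (Grp m n * Grp m n)%type) :
  GA (Grp m n * Grp m n * Grp m n)%type :=
  [ffun p : (Grp m n * Grp m n * Grp m n)%type => (p.1.1 == p.1.2)%:R * J (p.1.1, p.2)].


Section Setting.
Variables (n m : nat) (q : algC) (a : 'I_m -> 'I_m -> 'I_(n ^ 2)).

(* primitive idempotent 1_beta of C[G], 1_beta g_i = q^{beta_i} 1_beta *)
Definition idem (b : Grp m n) : GA (Grp m n) :=
  [ffun g : Grp m n => ((n ^ 2) ^ m)%:R^-1 * \prod_(i < m) q ^- (b i * g i)%N].

Definition cfun (z y : nat) : algC := q ^- (z * (y - y %% n))%N.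

Definition Jcoef (b c : Grp m n) : algC :=
  \prod_(i < m) \prod_(j < m) cfun (b i) (c j) ^+ (a i j).

Definition JJ : GA (Grp m n * Grp m n)%type :=
  \sum_(b : Grp m n) \sum_(c : Grp m n) gscale (Jcoef b c) (tens2 (idem b) (idem c)).

(* primitive idempotent 1_beta (beta in Z_n^m, components in {0..n-1}) of
   C[g_1^n,...,g_m^n], with 1_beta g_i^n = q^{n beta_i} 1_beta *)
Definition sidem (b : {ffun 'I_m -> 'I_n}) : GA (Grp m n) :=
  [ffun g : Grp m n => if [forall i, (n %| g i)%N]
             then (n ^ m)%:R^-1 * \prod_(i < m) q ^- (b i * g i)%N
             else 0].

Definition PhiCoef (b c d : {ffun 'I_m -> 'I_n}) : algC :=
  \prod_(i < m) \prod_(j < m)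
     q ^ ((a i j)%:Z * (b i)%:Z
          * (((c j + d j) %% n)%:Z - (c j)%:Z - (d j)%:Z)).

Definition Phi (Jinv : GA (Grp m n * Grp m n)%type) : GA (Grp m n * Grp m n * Grp m n)%type :=
  gmul3 (gmul3 (gmul3 (one_tens JJ) (id_Delta JJ)) (Delta_id Jinv)) (tens_one Jinv).

(* a group element of G^3 lies in <g_i^n>^3 (hence its basis vector is in A(x)A(x)A) *)
Definition inA3 (t : (Grp m n * Grp m n * Grp m n)%type) : bool :=
  [forall i, (n %| t.1.1 i)%N && (n %| t.1.2 i)%N && (n %| t.2 i)%N].

End Setting.

(* Main.v *)
Require Import Defs.
From HB Require Import structures.
From mathcomp Require Import all_boot all_order all_algebra all_field.
From mathcomp Require Import ring.
Import GRing.Theory Num.Theory.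
Local Open Scope ring_scope.

Section Proof.
Variables (n m : nat) (q : algC) (a : 'I_m -> 'I_m -> 'I_(n ^ 2)).
Hypothesis Hn : (2 <= n)%N.
Hypothesis Hq : (n ^ 2).-primitive_root q.

Local Notation G := (Grp m n).
Local Notation K := (n ^ 2)%N.

Lemma n_gt0 : (0 < n)%N. Proof. by apply: leq_trans Hn. Qed.
Lemma K_gt1 : (1 < K)%N.
Proof. rewrite expnS expn1. by apply: leq_trans (Hn) (leq_pmulr _ n_gt0). Qed.
Lemma Kcast : (Zp_trunc K).+2 = K. Proof. exact: Zp_cast K_gt1. Qed.
Lemma qK : q ^+ K = 1. Proof. exact: prim_expr_order Hq. Qed.
Lemma q_neq0 : q != 0.
Proof. apply/eqP=> q0; have := qK; rewrite q0 expr0n gtn_eqF ?(ltnW K_gt1) //. by move/esym/eqP; rewrite oner_eq0. Qed.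
Lemma qmod k : q ^+ (k %% K) = q ^+ k. Proof. exact: expr_mod qK. Qed.

Lemma Zp_addv (x y : 'Z_K) : nat_of_ord (x + y) = ((nat_of_ord x + nat_of_ord y) %% K)%N.
Proof. rewrite /=; set s := (_ + _)%N; clearbody s. by rewrite Kcast. Qed.

Lemma Zlt (x : 'Z_K) : (nat_of_ord x < K)%N.
Proof. by rewrite -[X in (_ < X)%N]Kcast ltn_ord. Qed.

Definition chi (b g : G) : algC := \prod_(i < m) q ^+ (b i * g i).

Lemma chiC b g : chi b g = chi g b.
Proof. by apply: eq_bigr => i _; rewrite mulnC. Qed.

Lemma chiD b g h : chi b (g + h) = chi b g * chi b h.
Proof.
rewrite /chi -big_split; apply: eq_bigr => i _ /=.
by rewrite ffunE Zp_addv -(qmod (b i * _)) modnMmr qmod mulnDr exprD.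
Qed.

Lemma chi0 b : chi b 0 = 1.
Proof. by apply: big1 => i _; rewrite ffunE muln0 expr0. Qed.

Lemma chiN b g : chi b (- g) * chi b g = 1.
Proof. by rewrite -chiD addNr chi0. Qed.

Lemma chi_neq0 b g : chi b g != 0.
Proof. by apply/eqP=> h; have := chiN b g; rewrite h mulr0 => /eqP; rewrite eq_sym oner_eq0. Qed.

Lemma chiNV b g : chi b (- g) = (chi b g)^-1.
Proof. by rewrite -[LHS]mulr1 -(mulfV (chi_neq0 b g)) mulrA chiN mul1r. Qed.

Lemma geo (w : algC) M : (0 < M)%N -> w ^+ M = 1 ->
  \sum_(k < M) w ^+ k = if w == 1 then M%:R else 0.
Proof.
move=> M0 wM; case: eqP => [->|/eqP w1].
  by rewrite (eq_bigr (fun _ => 1)) ?sumr_const ?card_ord // => i _; rewrite expr1n.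
have := subrX1 w M; rewrite wM subrr => /esym /eqP; rewrite mulf_eq0 subr_eq0 (negbTE w1) /=.
by move/eqP.
Qed.

Lemma sumZ k : \sum_(x : 'Z_K) q ^+ (k * x) = if (K %| k)%N then K%:R else 0.
Proof.
rewrite (eq_bigr (fun x : 'Z_K => (q ^+ k) ^+ x)); last by move=> x _; rewrite exprM.
rewrite geo //; last by rewrite Kcast -exprM mulnC exprM qK expr1n.
by rewrite -(prim_order_dvd Hq) Kcast.
Qed.

Lemma orth (b : G) : \sum_(g : G) chi b g = if b == 0 then (K ^ m)%:R else 0.
Proof.
rewrite /chi -(bigA_distr_bigA (fun i (x : 'Z_K) => q ^+ (b i * x))) /=.
under eq_bigr do rewrite sumZ.
case: eqP => [->|/eqP bn0].
  rewrite (eq_bigr (fun _ => K%:R)) ?prodr_const ?card_ord ?natrX // => i _.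
  by rewrite ffunE dvdn0.
have [i bi] : exists i, b i != 0.
  apply/existsP; move: bn0; apply: contraR; rewrite negb_exists => /forallP H.
  by apply/eqP/ffunP => i; rewrite ffunE; apply/eqP; have := H i; rewrite negbK.
rewrite (bigD1 i) //= ifF ?mul0r //.
apply/negbTE; move: bi; apply: contra => /dvdnP [k hk].
have := Zlt (b i).
rewrite hk; case: k hk => [|k] hk.
  by move=> _; apply/eqP/val_inj; rewrite /= hk.
by rewrite mulSn -ltn_subRL subnn.
Qed.


Lemma sum2 (I J : finType) (F : (I * J)%type -> algC) :
  \sum_(t : (I * J)%type) F t = \sum_(x : I) \sum_(y : J) F (x, y).
Proof. by rewrite pair_bigA; apply: eq_bigr => -[]. Qed.

Lemma sum3 (I J L : finType) (F : (I * J * L)%type -> algC) :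
  \sum_(t : (I * J * L)%type) F t = \sum_(x : I) \sum_(y : J) \sum_(z : L) F (x, y, z).
Proof. by rewrite sum2 sum2. Qed.

Lemma Km_neq0 : ((K ^ m)%:R : algC) != 0.
Proof. by rewrite pnatr_eq0 -lt0n expn_gt0 (ltnW K_gt1). Qed.

Lemma sumchi (s t : G) : \sum_(b : G) chi b s * (chi b t)^-1 = (s == t)%:R * (K ^ m)%:R.
Proof.
rewrite (eq_bigr (fun b => chi (s - t) b)); last first.
  by move=> b _; rewrite [chi (s - t) b]chiC chiD chiNV.
by rewrite orth subr_eq0; case: eqP; rewrite ?mul1r ?mul0r.
Qed.

Definition F1 (u : GA G) (b : G) := \sum_(x : G) u x * chi b x.

Lemma F1_idem b' b : F1 (idem q b') b = (b' == b)%:R.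
Proof.
rewrite /F1 (eq_bigr (fun x => (K ^ m)%:R^-1 * (chi b x * (chi b' x)^-1))); last first.
  move=> x _; rewrite ffunE /chi -prodfV -mulrA; congr (_ * _).
  by rewrite mulrC; congr (_ * _); apply: eq_bigr => i _; rewrite exprVn.
rewrite -mulr_sumr (eq_bigr (fun x => chi x b * (chi x b')^-1)); last by move=> x _; rewrite !(chiC x).
by rewrite sumchi eq_sym mulrCA mulVf ?mulr1 // Km_neq0.
Qed.


Definition F2 (x : GA (G * G)%type) (b c : G) :=
  \sum_(t : (G * G)%type) x t * (chi b t.1 * chi c t.2).
Definition F3 (x : GA (G * G * G)%type) (b c d : G) :=
  \sum_(t : (G * G * G)%type) x t * (chi b t.1.1 * chi c t.1.2 * chi d t.2).

Lemma F2mul x y b c : F2 (gmul2 x y) b c = F2 x b c * F2 y b c.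
Proof.
rewrite /F2; under eq_bigr do rewrite ffunE mulr_suml.
rewrite exchange_big mulr_suml; apply: eq_bigr => s _.
rewrite mulr_sumr.
rewrite (reindex_inj (h := fun u : (G * G)%type => (u.1 + s.1, u.2 + s.2))) /=; last first.
  by move=> [u1 u2] [v1 v2] /= [] /addIr -> /addIr ->.
apply: eq_bigr => -[u1 u2] _; rewrite /= !addrK !chiD; ring.
Qed.

Lemma F3mul x y b c d : F3 (gmul3 x y) b c d = F3 x b c d * F3 y b c d.
Proof.
rewrite /F3; under eq_bigr do rewrite ffunE mulr_suml.
rewrite exchange_big mulr_suml; apply: eq_bigr => s _.
rewrite mulr_sumr.
rewrite (reindex_inj (h := fun u : (G * G * G)%type => (u.1.1 + s.1.1, u.1.2 + s.1.2, u.2 + s.2))) /=; last first.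
  by move=> [[u1 u2] u3] [[v1 v2] v3] /= [] /addIr -> /addIr -> /addIr ->.
apply: eq_bigr => -[[u1 u2] u3] _; rewrite /= !addrK !chiD; ring.
Qed.


Lemma F2_sum (I : finType) (X : I -> GA (G * G)%type) b c :
  F2 (\sum_i X i) b c = \sum_i F2 (X i) b c.
Proof. by rewrite /F2; under eq_bigr do rewrite sum_ffunE mulr_suml; rewrite exchange_big. Qed.

Lemma F3_sum (I : finType) (X : I -> GA (G * G * G)%type) b c d :
  F3 (\sum_i X i) b c d = \sum_i F3 (X i) b c d.
Proof. by rewrite /F3; under eq_bigr do rewrite sum_ffunE mulr_suml; rewrite exchange_big. Qed.

Lemma F2_scale k x b c : F2 (gscale k x) b c = k * F2 x b c.
Proof. by rewrite /F2 mulr_sumr; apply: eq_bigr => t _; rewrite ffunE -mulrA. Qed.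

Lemma F3_scale k x b c d : F3 (gscale k x) b c d = k * F3 x b c d.
Proof. by rewrite /F3 mulr_sumr; apply: eq_bigr => t _; rewrite ffunE -mulrA. Qed.

Lemma F2_tens u v b c : F2 (tens2 u v) b c = F1 u b * F1 v c.
Proof.
rewrite /F2 sum2 /F1 mulr_suml; apply: eq_bigr => x _.
rewrite mulr_sumr; apply: eq_bigr => y _; rewrite ffunE /=; ring.
Qed.

Lemma sum_prod3 (I J L : finType) (f : I -> algC) (g : J -> algC) (h : L -> algC) :
  (\sum_x f x) * (\sum_y g y) * (\sum_z h z) = \sum_x \sum_y \sum_z f x * g y * h z.
Proof.
rewrite mulr_suml mulr_suml; apply: eq_bigr => x _.
rewrite [f x * _]mulr_sumr mulr_suml; apply: eq_bigr => y _.
by rewrite mulr_sumr.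
Qed.

Lemma F3_tens u v w b c d : F3 (tens3 u v w) b c d = F1 u b * F1 v c * F1 w d.
Proof.
rewrite /F3 sum3 /F1 sum_prod3; apply: eq_bigr => x _; apply: eq_bigr => y _.
apply: eq_bigr => z _; rewrite ffunE /=; ring.
Qed.

Lemma F2_JJ b c : F2 (JJ q a) b c = Jcoef q a b c.
Proof.
rewrite /JJ F2_sum; under eq_bigr do rewrite F2_sum.
under eq_bigr do under eq_bigr do rewrite F2_scale F2_tens !F1_idem.
rewrite (bigD1 b) //= [X in _ + X]big1 ?addr0; last first.
  by move=> b' nb; apply: big1 => c' _; rewrite (negbTE nb) mul0r mulr0.
rewrite (bigD1 c) //= [X in _ + X]big1 ?addr0; last first.
  by move=> c' nc; rewrite (negbTE nc) !mulr0.
by rewrite !eqxx !mulr1.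
Qed.

Lemma F2_one b c : F2 (gone2 m n) b c = 1.
Proof.
rewrite /F2 sum2 (bigD1 (0 : G)) //= [X in _ + X]big1 ?addr0; last first.
  by move=> x nx; apply: big1 => y _; rewrite ffunE /= (negbTE nx) mul0r.
rewrite (bigD1 (0 : G)) //= [X in _ + X]big1 ?addr0; last first.
  by move=> y ny; rewrite ffunE /= (negbTE ny) andbF mul0r.
by rewrite ffunE /= eqxx !chi0 !mulr1.
Qed.

Lemma F3_one_tens J b c d : F3 (one_tens J) b c d = F2 J c d.
Proof.
rewrite /F3 sum3 (bigD1 (0 : G)) //= [X in _ + X]big1 ?addr0; last first.
  by move=> x nx; apply: big1 => y _; apply: big1 => z _; rewrite ffunE /= (negbTE nx) !mul0r.
rewrite /F2 sum2; apply: eq_bigr => y _; apply: eq_bigr => z _.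
by rewrite ffunE /= eqxx chi0 mul1r mul1r.
Qed.

Lemma F3_tens_one J b c d : F3 (tens_one J) b c d = F2 J b c.
Proof.
rewrite /F3 sum3 /F2 sum2; apply: eq_bigr => x _; apply: eq_bigr => y _.
rewrite (bigD1 (0 : G)) //= [X in _ + X]big1 ?addr0; last first.
  by move=> z nz; rewrite ffunE /= (negbTE nz) !mul0r.
by rewrite ffunE /= eqxx chi0 mul1r mulr1.
Qed.

Lemma F3_id_Delta J b c d : F3 (id_Delta J) b c d = F2 J b (c + d).
Proof.
rewrite /F3 sum3 /F2 sum2; apply: eq_bigr => x _; apply: eq_bigr => y _.
rewrite (bigD1 y) //= [X in _ + X]big1 ?addr0; last first.
  by move=> z nz; rewrite ffunE /= eq_sym (negbTE nz) !mul0r.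
by rewrite ffunE /= eqxx mul1r (chiC (c + d)) chiD (chiC y c) (chiC y d) !mulrA.
Qed.

Lemma F3_Delta_id J b c d : F3 (Delta_id J) b c d = F2 J (b + c) d.
Proof.
rewrite /F3 sum3 /F2 sum2; apply: eq_bigr => x _.
rewrite (bigD1 x) //= [X in _ + X]big1 ?addr0; last first.
  by move=> y ny; apply: big1 => z _; rewrite ffunE /= eq_sym (negbTE ny) !mul0r.
apply: eq_bigr => z _.
by rewrite ffunE /= eqxx mul1r (chiC (b + c)) chiD (chiC x b) (chiC x c).
Qed.


Lemma F3inv_s (x : GA (G * G * G)%type) (s t : (G * G * G)%type) :
  \sum_(u : (G * G * G)%type) x s * (chi u.1.1 s.1.1 * chi u.1.2 s.1.2 * chi u.2 s.2)
     * (chi u.1.1 t.1.1 * chi u.1.2 t.1.2 * chi u.2 t.2)^-1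
  = x s * ((s == t)%:R * (K ^ m)%:R ^+ 3).
Proof.
have -> : (s == t)%:R * (K ^ m)%:R ^+ 3 =
   ((s.1.1 == t.1.1)%:R * (K ^ m)%:R) * ((s.1.2 == t.1.2)%:R * (K ^ m)%:R)
   * ((s.2 == t.2)%:R * (K ^ m)%:R) :> algC.
  case: s t => [[s1 s2] s3] [[t1 t2] t3] /=; rewrite !xpair_eqE.
  by case: (s1 == t1); case: (s2 == t2); case: (s3 == t3) => /=; ring.
rewrite -!sumchi sum_prod3 mulr_sumr sum3; apply: eq_bigr => b _.
rewrite mulr_sumr; apply: eq_bigr => c _; rewrite mulr_sumr; apply: eq_bigr => d _ /=.
rewrite !invfM; ring.
Qed.

Lemma F3inv (x : GA (G * G * G)%type) t :
  \sum_(u : (G * G * G)%type) F3 x u.1.1 u.1.2 u.2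
     * (chi u.1.1 t.1.1 * chi u.1.2 t.1.2 * chi u.2 t.2)^-1
  = (K ^ m)%:R ^+ 3 * x t.
Proof.
rewrite /F3; under eq_bigr do rewrite mulr_suml; rewrite exchange_big /=.
under eq_bigr do rewrite F3inv_s.
rewrite (bigD1 t) //= [X in _ + X]big1 ?addr0; last first.
  by move=> s /negbTE ->; rewrite mul0r mulr0.
by rewrite eqxx mul1r mulrC.
Qed.

Lemma F3_inj (x y : GA (G * G * G)%type) :
  (forall b c d, F3 x b c d = F3 y b c d) -> x = y.
Proof.
move=> H; apply/ffunP => t.
have := F3inv x t; under eq_bigr do rewrite H; rewrite F3inv.
by move/(mulfI (expf_neq0 3 Km_neq0)).
Qed.

Lemma divf_eq1 (x y : algC) : x != 0 -> (y * x^-1 == 1) = (y == x).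
Proof.
move=> xnz; apply/eqP/eqP => [h|->]; last by rewrite mulfV.
by rewrite -[y](mulfVK xnz) h mul1r.
Qed.

Lemma qKmul k : q ^+ (k * K) = 1.
Proof. by rewrite exprM exprAC qK expr1n. Qed.

Lemma sub_sum (u v : nat) : (u < n)%N ->
  \sum_(x : 'Z_K) (n %| x)%N%:R * (q ^- (u * x)%N * q ^+ (v * x)%N)
   = n%:R * (u == v %% n)%N%:R :> algC.
Proof.
move=> un.
rewrite -(big_mkord xpredT (fun x => (n %| x)%N%:R * (q ^- (u * x)%N * q ^+ (v * x)%N))).
rewrite Kcast -mulnn big_nat_mul.
rewrite (eq_bigr (fun i => (q ^- (u * n) * q ^+ (v * n)) ^+ i)); last first.
  move=> i _; rewrite mulSn -{1}(add0n (i * n)%N) big_addn addnK.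
  rewrite big_ltn ?n_gt0 // big_nat_cond big1 ?addr0; last first.
    move=> r /andP [/andP [r1 rn] _].
    by rewrite dvdn_addl ?dvdn_mull // gtnNdvd // mul0r.
  rewrite add0n dvdn_mull // mul1r exprMn exprVn -!exprM.
  by rewrite [(i * n)%N]mulnC !mulnA; apply: addr0.
rewrite big_mkord geo ?n_gt0 //; last first.
  rewrite exprMn exprVn -!exprM -!mulnA mulnn qKmul qKmul invr1 mulr1 //.
rewrite mulrC divf_eq1; last by rewrite expf_neq0 // q_neq0.
rewrite (eq_prim_root_expr Hq) -mulnn [(v * n)%N]mulnC [(u * n)%N]mulnC -!muln_modr.
rewrite eqn_pmul2l ?n_gt0 // (modn_small un) eq_sym.
by case: eqP; rewrite ?mulr1 ?mulr0.
Qed.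


Definition bmod (b : G) : {ffun 'I_m -> 'I_n} :=
  [ffun i => Ordinal (ltn_pmod (nat_of_ord (b i)) n_gt0)].

Lemma F1_sidem (b' : {ffun 'I_m -> 'I_n}) (b : G) :
  F1 (sidem q b') b = (b' == bmod b)%:R.
Proof.
rewrite /F1.
have E : forall x : G, sidem q b' x * chi b x = (n ^ m)%:R^-1 *
   \prod_i ((n %| x i)%N%:R * (q ^- (b' i * x i)%N * q ^+ (b i * x i)%N)).
  move=> x; rewrite ffunE /chi.
  case: (boolP [forall i, (n %| x i)%N]) => [/forallP H | /forallPn [i Hi]].
    have H1 : \prod_i (n %| x i)%N%:R = 1 :> algC by apply: big1 => i _; rewrite H.
    by rewrite [in RHS]big_split [in RHS]big_split /= H1 mul1r mulrA.
  by rewrite mul0r (bigD1 i) //= (negbTE Hi) !mul0r mulr0.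
under eq_bigr do rewrite E.
rewrite -mulr_sumr -(bigA_distr_bigA (fun i (x : 'Z_K) =>
   (n %| x)%N%:R * (q ^- (b' i * x)%N * q ^+ (b i * x)%N))) /=.
under eq_bigr do rewrite sub_sum ?ltn_ord //.
rewrite big_split /= prodr_const card_ord -natrX mulKf; last first.
  by rewrite pnatr_eq0 -lt0n expn_gt0 n_gt0.
case: (boolP (b' == bmod b)) => [/eqP -> | H].
  by apply: big1 => i _; rewrite ffunE /= eqxx.
have [i Hi] : exists i, b' i != bmod b i.
  apply/existsP; move: H; apply: contraR; rewrite negb_exists => /forallP HH.
  by apply/eqP/ffunP => i; apply/eqP; have := HH i; rewrite negbK.
rewrite (bigD1 i) //=.
have -> : (nat_of_ord (b' i) == (b i %% n)%N) = false; last by rewrite mul0r.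
apply/negbTE; move: Hi; apply: contra.
by move/eqP=> h; apply/eqP/val_inj; rewrite ffunE /= h.
Qed.


Lemma cf_pw (z y A : nat) :
  cfun n q z y ^+ A = q ^ (- (z%:Z * (y%:Z - (y %% n)%N%:Z) * A%:Z)).
Proof.
by rewrite /cfun exprVn -exprM exprnP -invr_expz subzn ?leq_mod // !PoszM.
Qed.


Lemma qz_eq (z1 z2 w : int) : z1 = z2 + (K%:Z) * w -> q ^ z1 = q ^ z2.
Proof.
move=> ->; rewrite expfzDr ?q_neq0 // -exprz_exp -exprnP qK exp1rz mulr1 //.
Qed.

Lemma term_eq (A B C Cp D : nat) :
  cfun n q C D ^+ A * cfun n q B ((Cp + D) %% (Zp_trunc K).+2) ^+ A
  * (cfun n q ((B + C) %% (Zp_trunc K).+2) D ^+ A)^-1 * (cfun n q B Cp ^+ A)^-1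
  = q ^ (A%:Z * (B %% n)%N%:Z * (((Cp %% n + D %% n) %% n)%N%:Z - (Cp %% n)%N%:Z - (D %% n)%N%:Z)).
Proof.
rewrite Kcast !cf_pw !invr_expz !opprK -!expfzDr ?q_neq0 //.
have dK : (n %| K)%N by rewrite dvdn_exp.
rewrite (modn_dvdm _ dK) modnDm.
apply: (@qz_eq _ _ ((B%:Z * ((Cp + D) %/ K)%N%:Z * A%:Z - ((B + C) %/ K)%N%:Z * n%:Z * (D %/ n)%N%:Z * A%:Z
                - ((Cp %% n + D %% n) %/ n)%N%:Z * A%:Z * (B %/ n)%N%:Z))).
have nK : K%:Z = n%:Z * n%:Z by rewrite -mulnn PoszM.
have hY : ((B + C) %% K)%N%:Z = B%:Z + C%:Z - n%:Z * n%:Z * ((B + C) %/ K)%N%:Z.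
  have := congr1 Posz (divn_eq (B + C) K); rewrite !PoszD PoszM nK => ->; ring.
have hX : ((Cp + D) %% K)%N%:Z = Cp%:Z + D%:Z - n%:Z * n%:Z * ((Cp + D) %/ K)%N%:Z.
  have := congr1 Posz (divn_eq (Cp + D) K); rewrite !PoszD PoszM nK => ->; ring.
have hr : ((Cp + D) %% n)%N%:Z = (Cp %% n)%N%:Z + (D %% n)%N%:Z
            - n%:Z * ((Cp %% n + D %% n) %/ n)%N%:Z.
  rewrite -modnDm; have := congr1 Posz (divn_eq (Cp %% n + D %% n) n); rewrite !PoszD PoszM => ->; ring.
have hB : B%:Z = n%:Z * (B %/ n)%N%:Z + (B %% n)%N%:Z.
  by rewrite {1}(divn_eq B n) PoszD PoszM mulrC.
have hC : Cp%:Z = n%:Z * (Cp %/ n)%N%:Z + (Cp %% n)%N%:Z.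
  by rewrite {1}(divn_eq Cp n) PoszD PoszM mulrC.
have hD : D%:Z = n%:Z * (D %/ n)%N%:Z + (D %% n)%N%:Z.
  by rewrite {1}(divn_eq D n) PoszD PoszM mulrC.
rewrite hY hX hr nK hB hC hD; ring.
Qed.


Lemma coef_eq b c d :
  Jcoef q a c d * Jcoef q a b (c + d) * (Jcoef q a (b + c) d)^-1 * (Jcoef q a b c)^-1
  = PhiCoef q a (bmod b) (bmod c) (bmod d).
Proof.
rewrite /Jcoef /PhiCoef -!prodfV -!big_split; apply: eq_bigr => i _ /=.
rewrite -!prodfV -!big_split; apply: eq_bigr => j _ /=.
by rewrite !ffunE /= term_eq.
Qed.

Lemma main_sec (Jinv : GA (G * G)%type) :
  gmul2 (JJ q a) Jinv = gone2 m n ->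
  Phi q a Jinv =
    \sum_(b : {ffun 'I_m -> 'I_n}) \sum_(c : {ffun 'I_m -> 'I_n})
      \sum_(d : {ffun 'I_m -> 'I_n})
        gscale (PhiCoef q a b c d)
          (tens3 (sidem q b) (sidem q c) (sidem q d))
  /\ (forall t, Phi q a Jinv t != 0 -> inA3 t).
Proof.
move=> HJ.
have Ji : forall b c, F2 Jinv b c = (Jcoef q a b c)^-1.
  move=> b c; have := F2mul (JJ q a) Jinv b c; rewrite HJ F2_one F2_JJ => h.
  have jnz : Jcoef q a b c != 0.
    by apply/eqP => h0; move: h; rewrite h0 mul0r => /eqP; rewrite oner_eq0.
  by rewrite -[RHS]mulr1 h mulrA mulVf // mul1r.
have E : Phi q a Jinv =
    \sum_(b : {ffun 'I_m -> 'I_n}) \sum_(c : {ffun 'I_m -> 'I_n})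
      \sum_(d : {ffun 'I_m -> 'I_n})
        gscale (PhiCoef q a b c d)
          (tens3 (sidem q b) (sidem q c) (sidem q d)).
  apply: F3_inj => b c d.
  rewrite /Phi !F3mul F3_one_tens F3_id_Delta F3_Delta_id F3_tens_one !F2_JJ !Ji.
  rewrite coef_eq F3_sum.
  under eq_bigr do rewrite F3_sum.
  under eq_bigr do under eq_bigr do rewrite F3_sum.
  under eq_bigr do under eq_bigr do under eq_bigr do rewrite F3_scale F3_tens !F1_sidem.
  rewrite (bigD1 (bmod b)) //= [X in _ + X]big1 ?addr0; last first.
    by move=> b' nb; apply: big1 => c' _; apply: big1 => d' _; rewrite (negbTE nb) !(mul0r, mulr0).
  rewrite (bigD1 (bmod c)) //= [X in _ + X]big1 ?addr0; last first.
    by move=> c' nc; apply: big1 => d' _; rewrite (negbTE nc) !(mul0r, mulr0).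
  rewrite (bigD1 (bmod d)) //= [X in _ + X]big1 ?addr0; last first.
    by move=> d' nd; rewrite (negbTE nd) !(mul0r, mulr0).
  by rewrite !eqxx !mulr1.
split=> // t; rewrite E; apply: contraR => nA.
have [i Hi] : exists i, ~~ ((n %| t.1.1 i) && (n %| t.1.2 i) && (n %| t.2 i))%N.
  by apply/forallPn.
have Z : forall (g : G), ~~ (n %| g i)%N -> [forall i0, (n %| g i0)%N] = false.
  move=> g hg; apply/negbTE/forallPn; by exists i.
apply/eqP; rewrite !sum_ffunE; apply: big1 => b _; rewrite sum_ffunE; apply: big1 => c _.
rewrite sum_ffunE; apply: big1 => d _; rewrite !ffunE.
move: Hi; rewrite !negb_and => /orP [/orP [h|h] | h]; by rewrite (Z _ h) /= !(mul0r, mulr0).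
Qed.

End Proof.

Theorem lemma4p2 (n m : nat) (q : algC) (a : 'I_m -> 'I_m -> 'I_(n ^ 2))
    (Jinv : GA (Grp m n * Grp m n)%type) :
  (2 <= n)%N -> (1 <= m)%N -> primitive_root_of_unity (n ^ 2) q ->
  gmul2 (JJ q a) Jinv = gone2 m n -> gmul2 Jinv (JJ q a) = gone2 m n ->
  Phi q a Jinv =
    \sum_(b : {ffun 'I_m -> 'I_n}) \sum_(c : {ffun 'I_m -> 'I_n})
      \sum_(d : {ffun 'I_m -> 'I_n})
        gscale (PhiCoef q a b c d)
          (tens3 (sidem q b) (sidem q c) (sidem q d))
  /\ (forall t, Phi q a Jinv t != 0 -> inA3 t).
Proof. by move=> Hn _ Hq H1 _; exact: (@main_sec n m q a Hn Hq Jinv H1). Qed.
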